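(* Let $f_1,\dots,f_n:\mathbb{R}^d\to\mathbb{R}$ be convex with each $f_i$ being $L_i$-smooth, let $f = \frac{1}{n}\sum_i f_i$ and let $x^*$ be a minimizer of $f$. Let $\mathcal{C}_1,\dots,\mathcal{C}_n$ be independent randomized compression operators with $\mathcal{C}_i\in\mathbb{B}^d(\omega_i)$, and let $\beta_i\in(0, \frac{1}{\omega_i+1}]$ for each $i$. For points $x^k, h_1^k,\dots,h_n^k$ define $h_i^{k+1} = h_i^k + \beta_i\mathcal{C}_i(\nabla f_i(x^k) - h_i^k)$ and $\sigma_k^2 = \frac{1}{n}\sum_{i=1}^n\omega_i\|h_i^k - \nabla f_i(x^* )\|^2$ (and analogously $\sigma_{k+1}^2$ with $h_i^{k+1}$). Then \[ \mathbb{E}\,\sigma_{k+1}^2 \leq (1 - \min_i\beta_i)\sigma_k^2 + 2\max_i\{\beta_i\omega_iL_i\}\,D_f(x^k,x^* ), \] where the expectation is over the compressors.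
   Context: A (random) operator $\mathcal{C}$ belongs to $\mathbb{B}^d(\omega)$ if $\mathbb{E}[\mathcal{C}(x)] = x$ and $\mathbb{E}\|\mathcal{C}(x)-x\|^2\leq\omega\|x\|^2$ for all $x$. The Bregman divergence is $D_f(x,y) = f(x)-f(y)-\langle\nabla f(y),x-y\rangle$. A differentiable $g$ is $L$-smooth if $\|\nabla g(x)-\nabla g(y)\|\leq L\|x-y\|$ for all $x,y$. *)

(* Defs.v *)
From HB Require Import structures.
From mathcomp Require Import all_boot all_order all_algebra.
From mathcomp Require Import all_classical all_reals all_analysis.
Set Implicit Arguments. Unset Strict Implicit. Unset Printing Implicit Defensive.
Import Order.TTheory GRing.Theory Num.Theory.
Import numFieldNormedType.Exports.
Local Open Scope classical_set_scope.
Local Open Scope ring_scope.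

Section Defs.
Variable R : realType.
Variable d : nat.
Local Notation V := 'rV[R]_d.

Definition dotv (u v : V) : R := \sum_(j < d) u ord0 j * v ord0 j.
Definition sqnorm (v : V) : R := dotv v v.
Definition enorm (v : V) : R := Num.sqrt (sqnorm v).

Definition grad (f : V -> R) (x : V) : V :=
  \row_(j < d) ('d f x) (delta_mx ord0 j : V).

Definition convex_fun (f : V -> R) : Prop :=
  forall (x y : V) (t : R), 0 <= t <= 1 ->
    f (t *: x + (1 - t) *: y) <= t * f x + (1 - t) * f y.

Definition smooth (L : R) (f : V -> R) : Prop :=
  (forall x, differentiable f x) /\
  forall x y : V, enorm (grad f x - grad f y) <= L * enorm (x - y).

Definition bregman (f : V -> R) (x y : V) : R :=
  f x - f y - dotv (grad f y) (x - y).

(* C : Omega -> (R^d -> R^d) is a random operator in B^d(omega) w.r.t. P: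
   unbiased (coordinatewise integrable with mean x) and
   E ||C(x) - x||^2 <= omega ||x||^2. *)
Definition in_B {dO} {Omega : measurableType dO} (P : probability Omega R)
    (omega : R) (C : Omega -> V -> V) : Prop :=
  forall x : V,
    (forall j : 'I_d,
       P.-integrable setT (fun w => ((C w x) ord0 j)%:E) /\
       (\int[P]_w ((C w x) ord0 j)%:E = (x ord0 j)%:E)%E) /\
    (\int[P]_w (sqnorm (C w x - x))%:E <= (omega * sqnorm x)%:E)%E.

(* Mutual independence of the random operators C_1,...,C_n: for every finite
   family of evaluation points and Borel sets, the joint law of the
   finite-dimensional evaluations factorizes across operators. *)
Definition indep_ops {dO} {Omega : measurableType dO} (P : probability Omega R)
    (n : nat) (C : 'I_n -> Omega -> V -> V) : Prop :=
  forall (m : nat) (x : 'I_n -> 'I_m -> V) (A : 'I_n -> 'I_m -> 'I_d -> set R),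
    (forall i l j, measurable (A i l j)) ->
    P [set w | forall i l j, A i l j ((C i w (x i l)) ord0 j)] =
    (\prod_(i < n) P [set w | forall l j, A i l j ((C i w (x i l)) ord0 j)])%E.

End Defs.

(* Main.v *)
Require Import Defs.
From HB Require Import structures.
From mathcomp Require Import all_boot all_order all_algebra.
From mathcomp Require Import all_classical all_reals all_analysis.
From mathcomp Require Import ring lra.
Import Order.TTheory GRing.Theory Num.Theory.
Import numFieldNormedType.Exports.
Local Open Scope classical_set_scope.
Local Open Scope ring_scope.

Set Implicit Arguments. Unset Strict Implicit. Unset Printing Implicit Defensive.



Section Vec.
Variables (R : realType) (d : nat).
Local Notation V := 'rV[R]_d.
Implicit Types u v w : V.

Lemma dotvC u v : dotv u v = dotv v u.
Proof. by apply: eq_bigr => j _; rewrite mulrC. Qed.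

Lemma dotvDl u v w : dotv (u + v) w = dotv u w + dotv v w.
Proof. by rewrite /dotv -big_split; apply: eq_bigr => j _; rewrite mxE mulrDl. Qed.

Lemma dotvZl (a : R) u w : dotv (a *: u) w = a * dotv u w.
Proof. by rewrite /dotv mulr_sumr; apply: eq_bigr => j _; rewrite mxE mulrA. Qed.

Lemma dotvNl u w : dotv (- u) w = - dotv u w.
Proof. by rewrite -scaleN1r dotvZl mulN1r. Qed.

Lemma dotvBl u v w : dotv (u - v) w = dotv u w - dotv v w.
Proof. by rewrite dotvDl dotvNl. Qed.

Lemma dotvDr u v w : dotv w (u + v) = dotv w u + dotv w v.
Proof. by rewrite dotvC dotvDl !(dotvC w). Qed.
Lemma dotvZr (a : R) u w : dotv w (a *: u) = a * dotv w u.
Proof. by rewrite dotvC dotvZl dotvC. Qed.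
Lemma dotvNr u w : dotv w (- u) = - dotv w u.
Proof. by rewrite dotvC dotvNl dotvC. Qed.
Lemma dotvBr u v w : dotv w (u - v) = dotv w u - dotv w v.
Proof. by rewrite dotvDr dotvNr. Qed.
Lemma dotv0l w : dotv 0 w = 0.
Proof. by rewrite -(scale0r (0 : V)) dotvZl mul0r. Qed.
Lemma dotv0r w : dotv w 0 = 0.
Proof. by rewrite dotvC dotv0l. Qed.

Lemma sqnorm_ge0 u : 0 <= sqnorm u.
Proof. by apply: sumr_ge0 => j _; rewrite -expr2 sqr_ge0. Qed.

Lemma sqnorm_eq0 u : sqnorm u = 0 -> u = 0.
Proof.
move=> /eqP; rewrite /sqnorm /dotv psumr_eq0; last by move=> j _; rewrite -expr2 sqr_ge0.
move=> /allP H; apply/rowP => j; rewrite mxE.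
by have /(_ (mem_index_enum j)) := H j; rewrite -expr2 sqrf_eq0 => /eqP.
Qed.

Lemma sqnormD u v : sqnorm (u + v) = sqnorm u + 2 * dotv u v + sqnorm v.
Proof. rewrite /sqnorm !dotvDl !dotvDr (dotvC v u); ring. Qed.

Lemma sqnormB u v : sqnorm (u - v) = sqnorm u - 2 * dotv u v + sqnorm v.
Proof. rewrite /sqnorm !dotvBl !dotvBr (dotvC v u); ring. Qed.

Lemma sqnormZ (a : R) u : sqnorm (a *: u) = a ^+ 2 * sqnorm u.
Proof. rewrite /sqnorm dotvZl dotvZr; ring. Qed.

Lemma sqnormN u : sqnorm (- u) = sqnorm u.
Proof. rewrite /sqnorm dotvNl dotvNr; ring. Qed.

Lemma enorm_ge0 u : 0 <= enorm u.
Proof. exact: sqrtr_ge0. Qed.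

Lemma enorm_sqr u : enorm u ^+ 2 = sqnorm u.
Proof. by rewrite /enorm sqr_sqrtr // sqnorm_ge0. Qed.

Lemma enormZ (a : R) u : enorm (a *: u) = `|a| * enorm u.
Proof. by rewrite /enorm sqnormZ sqrtrM ?sqr_ge0 // sqrtr_sqr. Qed.

Lemma CS u v : dotv u v <= enorm u * enorm v.
Proof.
have key : enorm u * enorm v * dotv u v <= (enorm u * enorm v) ^+ 2.
  have := sqnorm_ge0 (enorm v *: u - enorm u *: v).
  rewrite sqnormB !sqnormZ dotvZl dotvZr -!enorm_sqr => H.
  rewrite exprMn; nra.
have [H|H0] := eqVneq (enorm u * enorm v) 0.
  move: H => /eqP; rewrite mulf_eq0 => /orP[] /eqP H.
    have : sqnorm u = 0 by rewrite -enorm_sqr H expr0n.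
    by move/sqnorm_eq0 => ->; rewrite dotv0l mulr_ge0 ?enorm_ge0.
  have : sqnorm v = 0 by rewrite -enorm_sqr H expr0n.
  by move/sqnorm_eq0 => ->; rewrite dotv0r mulr_ge0 ?enorm_ge0.

have pos : 0 < enorm u * enorm v by rewrite lt_def H0 mulr_ge0 // enorm_ge0.
rewrite expr2 in key.
by rewrite -(ler_pM2l pos).
Qed.

End Vec.



Section Calc.
Variables (R : realType) (d : nat).
Local Notation V := 'rV[R]_d.
Implicit Types u v w x y z : V.

Lemma grad_dot (f : V -> R) x v : dotv (grad f x) v = 'd f x v.
Proof.
rewrite [in RHS](row_sum_delta v) linear_sum /dotv; apply: eq_bigr => j _.
by rewrite mxE linearZ /= mulrC.
Qed.

Lemma line_derive (f : V -> R) x v t : differentiable f (x + t *: v) ->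
  is_derive t 1 (fun s : R => f (x + s *: v)) ('d f (x + t *: v) v).
Proof.
move=> H.
have EE : (fun h : R => h^-1 *: (((fun s : R => f (x + s *: v)) \o shift t) (h *: 1) - f (x + t *: v)))
  = (fun h : R => h^-1 *: ((f \o shift (x + t *: v)) (h *: v) - f (x + t *: v))).
  apply/funext => h /=. congr (_ *: (_ - _)). congr f. rewrite /shift /=.
  rewrite [_%:A]mulr1 scalerDl addrCA addrA; congr (_ + _); exact: addrC.
apply: DeriveDef.
  by rewrite /derivable EE; exact: diff_derivable.
by rewrite /derive EE -deriveE.
Qed.

End Calc.

Section Calc1b.
Variables (R : realType) (d : nat).
Local Notation V := 'rV[R]_d.
Lemma line_derive' (f : V -> R) x v t : differentiable f (x + t *: v) ->
  is_derive t 1 (fun s : R => f (x + s *: v)) (dotv (grad f (x + t *: v)) v).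
Proof. by move=> H; rewrite grad_dot; exact: line_derive. Qed.
End Calc1b.



Section Calc2.
Variables (R : realType) (d : nat).
Local Notation V := 'rV[R]_d.
Implicit Types u v w x y z : V.

Lemma convex_first (f : V -> R) y z : convex_fun f -> differentiable f y ->
  f y + 'd f y (z - y) <= f z.
Proof.
move=> cf Hd.
set v := z - y.
have dv : derivable f y v := diff_derivable Hd.
rewrite -deriveE //.
set q := (fun h : R => h^-1 *: ((f \o shift y) (h *: v) - f y)).
have cr : q @ 0^'+ --> 'D_v f y.
  move=> A /dv /nbhs_ballP [_ /posnumP[e] xe_A].
  by exists e%:num => //= y' xe_y; rewrite lt_def => /andP [xney _]; apply: xe_A.
rewrite -lerBrDl.
apply: (cvgr_to_le cr).
near=> h.
have h0 : 0 < h by near: h; exact: nbhs_right_gt.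
have h1 : h < 1 by near: h; exact: nbhs_right_lt.
rewrite /q /= -[_ *: _]/(_ * _) ler_pdivrMl //.
have hh : 0 <= h <= 1 by rewrite !ltW.
have := cf z y h hh.
have -> : h *: z + (1 - h) *: y = h *: v + y.
  by rewrite /v scalerBr scalerBl scale1r addrA addrAC.
lra.
Unshelve. all: by end_near.
Qed.

Lemma convex_first' (f : V -> R) y z : convex_fun f -> differentiable f y ->
  f y + dotv (grad f y) (z - y) <= f z.
Proof. by move=> cf Hd; rewrite grad_dot; exact: convex_first. Qed.

End Calc2.



Section Calc3.
Variables (R : realType) (d : nat).
Local Notation V := 'rV[R]_d.
Implicit Types u v w x y z : V.

Lemma descent (f : V -> R) (L : R) x z : smooth L f ->
  f z <= f x + dotv (grad f x) (z - x) + L / 2 * sqnorm (z - x).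
Proof.
move=> [fd fL].
set v := z - x; set s := sqnorm v; set c := dotv (grad f x) v.
pose g := fun t : R => f (x + t *: v).
pose k := fun t : R => c * t + (L / 2 * s) * (t * t).
have dk (t : R) : is_derive t (1 : R) k (c + L * s * t).
  have -> : k = (c \*: id) + ((L / 2 * s) \*: (id * id)).
    by apply/funext => r; rewrite /k /=.
  apply: (is_derive_eq (is_deriveD (is_deriveZ c (is_derive_id t 1))
     (is_deriveZ (L/2*s) (is_deriveM (is_derive_id t 1) (is_derive_id t 1))))).
  rewrite ![_%:A]mulr1; change (c + (L/2*s) * (t + t) = c + L*s*t).
  by field.
have dg (t : R) : is_derive t (1:R) g (dotv (grad f (x + t *: v)) v) :=
  line_derive' (fd (x + t *: v)).
pose h := g - k.
have dh (t : R) : is_derive t (1:R) h (dotv (grad f (x + t *: v)) v - (c + L * s * t)).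
  exact: is_deriveB.
have hle : h 1 <= h 0.
  apply: (@ler0_derive1_le_cc _ h 0 1).
  - by move=> t _; case: (dh t).
  - move=> t; rewrite in_itv /= => /andP[t0 t1]; rewrite derive1E derive_val.
    rewrite subr_le0 -lerBlDl /c -dotvBl.
    apply: (le_trans (CS _ _)).
    apply: (le_trans (ler_wpM2r (enorm_ge0 _) (fL _ _))).
    rewrite addrC addKr enormZ (ger0_norm (ltW t0)) -!mulrA -expr2 enorm_sqr -/s.
    by rewrite [t * s]mulrC mulrA.
  - by apply: derivable_within_continuous => t _; case: (dh t).
  - by rewrite in_itv /= lexx ler01.
  - by rewrite in_itv /= lexx ler01.
  - exact: ler01.
have hle' : f (x + 1 *: v) - (c * 1 + L/2*s*(1*1)) <= f (x + 0 *: v) - (c*0 + L/2*s*(0*0)) := hle.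
have xv : x + v = z by rewrite /v addrC subrK.
move: hle'; rewrite scale1r scale0r addr0 xv.
rewrite !mulr1 !mulr0 ?mul0r ?addr0 ?subr0 => H.
lra.
Qed.

End Calc3.



Section Calc4.
Variables (R : realType) (d : nat).
Local Notation V := 'rV[R]_d.
Implicit Types u v w x y z : V.

Lemma bregman_ge0 (f : V -> R) x y : convex_fun f -> differentiable f y ->
  0 <= bregman f x y.
Proof.
move=> cf fd; have := convex_first' x cf fd; rewrite /bregman; lra.
Qed.

Lemma aux1 (fy fw fx e a b mS : R) : fy + (e - a) <= fw -> fw <= fx + - b + mS / 2 ->
  mS = b - a -> mS / 2 <= fx - fy - e.
Proof. lra. Qed.

Lemma aux2 (L mS D : R) : L * mS = 2 * L * (mS / 2) -> L * (mS / 2) <= L * D -> L * mS <= 2 * L * D.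
Proof. lra. Qed.

Lemma cocoercive (f : V -> R) (L : R) x y : convex_fun f -> smooth L f ->
  sqnorm (grad f x - grad f y) <= 2 * L * bregman f x y.
Proof.
move=> cf sm; have [fd fL] := sm.
set Dl := grad f x - grad f y.
have [Lpos|Lle0] := ltrP 0 L.
  set m := L^-1.
  have Lm : L * m = 1 by rewrite /m mulfV // gt_eqF.
  have m0 : 0 < m by rewrite /m invr_gt0.
  set w := x - m *: Dl.
  have H1 := convex_first' w cf (fd y).
  have H2 := descent x w sm.
  have wy : w - y = (x - y) - m *: Dl by rewrite /w addrAC.
  have wx : w - x = - (m *: Dl) by rewrite /w addrAC subrr add0r.
  have e1 : dotv (grad f y) (w - y) = dotv (grad f y) (x - y) - m * dotv (grad f y) Dl.
    by rewrite wy (dotvBr (x - y) (m *: Dl)) dotvZr.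
  have e2 : dotv (grad f x) (w - x) = - (m * dotv (grad f x) Dl).
    by rewrite wx dotvNr dotvZr.
  have e3 : sqnorm (w - x) = m ^+ 2 * sqnorm Dl by rewrite wx sqnormN sqnormZ.
  have SD : sqnorm Dl = dotv (grad f x) Dl - dotv (grad f y) Dl.
    by rewrite /sqnorm {1}/Dl dotvBl.
  have E : L / 2 * (m ^+ 2 * sqnorm Dl) = m * sqnorm Dl / 2.
    by rewrite /m; field; rewrite gt_eqF.
  rewrite e1 in H1; rewrite e2 e3 E in H2.
  have mS : m * sqnorm Dl = m * dotv (grad f x) Dl - m * dotv (grad f y) Dl.
    by rewrite SD mulrBr.
  rewrite /bregman.
  have key : m * sqnorm Dl / 2 <= f x - f y - dotv (grad f y) (x - y).
    exact: (aux1 H1 H2 mS).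
  have : L * (m * sqnorm Dl / 2) <= L * (f x - f y - dotv (grad f y) (x - y)).
    by rewrite ler_pM2l.
  move=> H.
  have -> : sqnorm Dl = L * (m * sqnorm Dl) by rewrite mulrA Lm mul1r.
  by apply: aux2 H; field.

have Dl0 : enorm Dl = 0.
  apply/eqP; rewrite eq_le enorm_ge0 andbT.
  by apply: (le_trans (fL x y)); exact: mulr_le0_ge0 Lle0 (enorm_ge0 _).
have S0 : sqnorm Dl = 0 by rewrite -enorm_sqr Dl0 expr0n.
rewrite S0.
have [L0|Lneg] := eqVneq L 0; first by rewrite L0 mulr0 mul0r.
have Llt : L < 0 by rewrite lt_neqAle Lneg Lle0.
have exy : enorm (x - y) = 0.
  apply/eqP; rewrite eq_le enorm_ge0 andbT.
  have := fL x y; rewrite Dl0 => H.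
  by rewrite -(ler_nM2l Llt) mulr0.
have : sqnorm (x - y) = 0 by rewrite -enorm_sqr exy expr0n.
move/sqnorm_eq0/eqP; rewrite subr_eq0 => /eqP ->.
by rewrite /bregman !subrr dotv0r !subr0 mulr0.
Qed.

End Calc4.



Section Calc5.
Variables (R : realType) (d : nat).
Local Notation V := 'rV[R]_d.
Implicit Types u v w x y z : V.

Lemma grad_avg n (F : 'I_n -> V -> R) (c : R) y v :
  (forall i, differentiable (F i) y) ->
  dotv (grad (fun x => c * \sum_(i < n) F i x) y) v =
  c * \sum_(i < n) dotv (grad (F i) y) v.
Proof.
move=> dF.
have -> : (fun x => c * \sum_(i < n) F i x) = c *: \sum_(i < n) F i.
  by apply/funext => x; rewrite fct_sumE.
have dS : differentiable (\sum_(i < n) F i) y := differentiable_sum dF.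
rewrite grad_dot -deriveE; last exact: differentiableZ.
rewrite deriveZ; last exact: diff_derivable.
rewrite derive_sum; last by move=> i; exact: diff_derivable.
congr (_ * _); apply: eq_bigr => i _; rewrite grad_dot deriveE //.
Qed.

End Calc5.



Section Prob.
Variables (R : realType) (d : nat) (dO : measure_display) (Omega : measurableType dO)
  (P : probability Omega R).
Local Notation V := 'rV[R]_d.

Lemma alg1 (b om Su Se eu : R) : 0 < b -> b * (om + 1) <= 1 -> 0 <= Su ->
  (Se + 2 * (b * eu) + b ^+ 2 * Su) + b ^+ 2 * (om * Su) <=
  (1 - b) * Se + b * (Se + 2 * eu + Su).
Proof.
move=> b0 bom Su0.
rewrite -subr_ge0.
have -> : (1 - b) * Se + b * (Se + 2 * eu + Su) -
   (Se + 2 * (b * eu) + b ^+ 2 * Su + b ^+ 2 * (om * Su)) = b * Su * (1 - b * (om + 1)).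
  by ring.
by rewrite mulr_ge0 ?subr_ge0 // mulr_ge0 // ltW.
Qed.

Lemma integral_cstP (k : R) : (\int[P]_w (k%:E) = k%:E)%E.
Proof.
rewrite integral_cst //.
have H : forall p : \bar R, p = 1%E -> (k%:E * p = k%:E)%E by move=> p ->; rewrite mule1.
by apply: H; exact: probability_setT P.
Qed.

Lemma step_i (om b : R) (Ci : Omega -> V -> V) (e u : V) :
  in_B P om Ci -> 0 < b -> b <= (om + 1)^-1 ->
  P.-integrable setT (fun w => (sqnorm (e + b *: Ci w u))%:E) /\
  (\int[P]_w (sqnorm (e + b *: Ci w u))%:E <=
     ((1 - b) * sqnorm e + b * sqnorm (e + u))%:E)%E.
Proof.
move=> HB b0 ble.
have [Hj HX] := HB u.
have om1 : 0 < om + 1.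
  rewrite ltNge; apply/negP => H.
  have : b <= 0 by apply: (le_trans ble); rewrite invr_le0.
  by rewrite leNgt b0.
have bom : b * (om + 1) <= 1.
  by rewrite -ler_pdivlMr // mul1r.
pose Y (j : 'I_d) (w : Omega) := (Ci w u) ord0 j.
have mY j : measurable_fun setT (Y j).
  by apply/measurable_realfun.measurable_EFinP; exact: (measurable_int P (Hj j).1).
pose X w := sqnorm (Ci w u - u).
have mX : measurable_fun setT X.
  have -> : X = (fun w => \sum_(j < d) (Y j w - u ord0 j) * (Y j w - u ord0 j)).
    by apply/funext => w; rewrite /X /sqnorm /dotv; apply: eq_bigr => j _; rewrite !mxE.
  apply: measurable_sum => j.
  by apply: measurable_realfun.measurable_funM; apply: measurable_realfun.measurable_funB => //; exact: measurable_cst.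
have iX : P.-integrable setT (fun w => (X w)%:E).
  apply/integrableP; split; first exact/measurable_realfun.measurable_EFinP.
  under eq_integral do rewrite abse_EFin ger0_norm ?sqnorm_ge0 //.
  exact: (le_lt_trans HX (ltry _)).
set a := e + b *: u.
pose Z w := \sum_(j < d) a ord0 j * (Y j w - u ord0 j).
have pw w : sqnorm (e + b *: Ci w u) = sqnorm a + 2 * b * Z w + b ^+ 2 * X w.
  have -> : e + b *: Ci w u = a + b *: (Ci w u - u).
    by rewrite /a scalerBr addrCA addrK addrC.
  have -> : Z w = dotv a (Ci w u - u).
    by rewrite /Z /dotv; apply: eq_bigr => j _; rewrite !mxE.
  rewrite sqnormD sqnormZ dotvZr /X; ring.
have iK : P.-integrable setT (fun _ => (sqnorm a)%:E).
  exact: finite_measure_integrable_cst.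
have EZ : (fun w => (Z w)%:E) =
    (fun w => \sum_(j < d) (a ord0 j)%:E * ((Y j w)%:E - (u ord0 j)%:E))%E.
  by apply/funext => w; rewrite /Z -sumEFin.
have iZj j : P.-integrable setT
    (fun w => (a ord0 j)%:E * ((Y j w)%:E - (u ord0 j)%:E))%E.
  apply: (integrableZl measurableT).
  apply: (integrableB measurableT (f := fun w => (Y j w)%:E) (g := fun _ => (u ord0 j)%:E)).
  - exact: (Hj j).1.
  - exact: finite_measure_integrable_cst.
have iZ : P.-integrable setT (fun w => (Z w)%:E).
  by rewrite EZ; apply: (integrable_sum measurableT) => j _; exact: iZj.
have IZ : (\int[P]_w (Z w)%:E = 0)%E.
  rewrite EZ integral_sum //; apply: big1 => j _.
  rewrite integralZl //; last first.
    apply: (integrableB measurableT (f := fun w => (Y j w)%:E) (g := fun _ => (u ord0 j)%:E)).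
    - exact: (Hj j).1.
    - exact: finite_measure_integrable_cst.
  rewrite (integralB_EFin measurableT (Hj j).1); last exact: finite_measure_integrable_cst.
  by rewrite (Hj j).2 integral_cstP subee // mule0.
have E : (fun w => (sqnorm (e + b *: Ci w u))%:E) = (fun w =>
    (sqnorm a)%:E + (2 * b)%:E * (Z w)%:E + (b ^+ 2)%:E * (X w)%:E)%E.
  by apply/funext => w; rewrite pw.
rewrite E.
have iA : P.-integrable setT (fun w => (sqnorm a)%:E + (2 * b)%:E * (Z w)%:E)%E.
  by apply: (integrableD measurableT) => //; exact: (integrableZl measurableT).
have iB : P.-integrable setT (fun w => (b ^+ 2)%:E * (X w)%:E)%E.
  exact: (integrableZl measurableT).
split; first exact: (integrableD measurableT).
rewrite integralD // integralD //; last exact: (integrableZl measurableT).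
rewrite integralZl // integralZl // IZ integral_cstP mule0 adde0.
have fX : (\int[P]_w (X w)%:E = (fine (\int[P]_w (X w)%:E))%:E)%E.
  by rewrite fineK // integrable_fin_num.
rewrite fX -EFinM -EFinD lee_fin.
have rle : fine (\int[P]_w (X w)%:E) <= om * sqnorm u.
  by rewrite -lee_fin -fX.
apply: (le_trans (y := sqnorm a + b ^+ 2 * (om * sqnorm u))).
  by rewrite lerD2l ler_wpM2l // sqr_ge0.
rewrite /a sqnormD sqnormZ dotvZr (sqnormD e u).
exact: alg1 b0 bom (sqnorm_ge0 u).
Qed.

End Prob.



Section Big.
Variable R : realType.

Lemma bigmin_le_seq (I : eqType) (s : seq I) (P : pred I) (F : I -> R) i :
  i \in s -> P i -> \big[Num.min/1]_(j <- s | P j) F j <= F i.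
Proof.
elim: s => [//|a s IH]; rewrite in_cons big_cons => /orP[/eqP<-|Hs] Pi.
  by rewrite Pi ge_min lexx.
by case: (P a); [rewrite ge_min IH ?orbT | exact: IH].
Qed.

Lemma le_bigmax_seq (I : eqType) (s : seq I) (P : pred I) (F : I -> R) i :
  i \in s -> P i -> F i <= \big[Num.max/0]_(j <- s | P j) F j.
Proof.
elim: s => [//|a s IH]; rewrite in_cons big_cons => /orP[/eqP<-|Hs] Pi.
  by rewrite Pi le_max lexx.
by case: (P a); [rewrite le_max IH ?orbT | exact: IH].
Qed.

Lemma bigmax_ge0_seq (I : eqType) (s : seq I) (P : pred I) (F : I -> R) :
  0 <= \big[Num.max/0]_(j <- s | P j) F j.
Proof.
elim: s => [|a s IH]; first by rewrite big_nil.
by rewrite big_cons; case: (P a) => //; rewrite le_max IH orbT.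
Qed.

Lemma bigmin_le n (F : 'I_n -> R) i : \big[Num.min/1]_(j < n) F j <= F i.
Proof. exact: bigmin_le_seq (mem_index_enum i) _. Qed.

Lemma le_bigmax n (F : 'I_n -> R) i : F i <= \big[Num.max/0]_(j < n) F j.
Proof. exact: le_bigmax_seq (mem_index_enum i) _. Qed.

Lemma bigmax_ge0 n (F : 'I_n -> R) : 0 <= \big[Num.max/0]_(j < n) F j.
Proof. exact: bigmax_ge0_seq. Qed.

End Big.

Section Prob2.
Variables (R : realType) (d : nat) (dO : measure_display) (Omega : measurableType dO)
  (P : probability Omega R).
Local Notation V := 'rV[R]_d.

Lemma om_nonneg (om : R) (Ci : Omega -> V -> V) (v : V) :
  in_B P om Ci -> 0 <= om * sqnorm v.
Proof.
move=> HB; have [_ H] := HB v.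
rewrite -lee_fin; apply: le_trans H.
by apply: integral_ge0 => w _; rewrite lee_fin sqnorm_ge0.
Qed.

End Prob2.

Unset Implicit Arguments. Set Strict Implicit.


Lemma aux3 (R : realType) (X1 X2 Y1 Y2 Z1 Z2 : R) : X1 <= X2 -> Y1 <= Y2 -> Y2 = 2 * Z1 -> Z1 <= Z2 ->
  X1 + Y1 <= X2 + 2 * Z2.
Proof. lra. Qed.

Theorem lemma4 (R : realType) (d n : nat) (dO : measure_display)
  (Omega : measurableType dO) (P : probability Omega R)
  (fs : 'I_n -> 'rV[R]_d -> R) (L : 'I_n -> R)
  (C : 'I_n -> Omega -> 'rV[R]_d -> 'rV[R]_d) (omega beta : 'I_n -> R)
  (xstar xk : 'rV[R]_d) (hk : 'I_n -> 'rV[R]_d) :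
  (0 < n)%N ->
  (forall i, convex_fun (fs i)) ->
  (forall i, smooth (L i) (fs i)) ->
  let f := fun x => n%:R^-1 * \sum_(i < n) fs i x in
  (forall x, f xstar <= f x) ->
  indep_ops P C ->
  (forall i, in_B P (omega i) (C i)) ->
  (forall i, 0 < beta i <= (omega i + 1)^-1) ->
  let hk1 := fun (w : Omega) (i : 'I_n) =>
    hk i + beta i *: C i w (grad (fs i) xk - hk i) in
  let sigk := n%:R^-1 * \sum_(i < n) omega i * sqnorm (hk i - grad (fs i) xstar) in
  let sigk1 := fun w : Omega =>
    n%:R^-1 * \sum_(i < n) omega i * sqnorm (hk1 w i - grad (fs i) xstar) in
  let betamin := \big[Num.min/1]_(i < n) beta i in
  let bwlmax := \big[Num.max/0]_(i < n) (beta i * omega i * L i) in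
  (\int[P]_w (sigk1 w)%:E <=
    ((1 - betamin) * sigk + 2 * bwlmax * bregman f xk xstar)%:E)%E.
Proof.
move=> n0 cvx sm f fmin ind HB hb; cbv zeta.
pose e i := hk i - grad (fs i) xstar.
pose u i := grad (fs i) xk - hk i.
pose S i w := sqnorm (e i + beta i *: C i w (u i)).
have hk1E w i : hk i + beta i *: C i w (grad (fs i) xk - hk i) - grad (fs i) xstar
    = e i + beta i *: C i w (u i).
  by rewrite /e /u addrAC.
have eu i : e i + u i = grad (fs i) xk - grad (fs i) xstar.
  by rewrite /e /u addrC addrA subrK.
have step i := step_i (e i) (u i) (HB i) (andP (hb i)).1 (andP (hb i)).2.
have iS i : P.-integrable setT (fun w => (S i w)%:E) := (step i).1.
have iSo i : P.-integrable setT (fun w => (omega i)%:E * (S i w)%:E)%E.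
  exact: (integrableZl measurableT).
have SE : (fun w => (n%:R^-1 * \sum_(i < n) omega i *
    sqnorm (hk i + beta i *: C i w (grad (fs i) xk - hk i) - grad (fs i) xstar))%:E) =
    (fun w => (n%:R^-1)%:E * \sum_(i < n) (omega i)%:E * (S i w)%:E)%E.
  apply/funext => w; rewrite EFinM -sumEFin; congr (_ * _)%E.
  by apply: eq_bigr => i _; rewrite hk1E.
rewrite SE integralZl //; last first.
  by apply: (integrable_sum measurableT) => i _; exact: iSo.
rewrite integral_sum //.
set bm := \big[Num.min/1]_(i < n) beta i.
set bw := \big[Num.max/0]_(i < n) (beta i * omega i * L i).
pose D i := bregman (fs i) xk xstar.
pose T i := (1 - bm) * (omega i * sqnorm (e i)) + 2 * bw * D i.
have D0 i : 0 <= D i by apply: bregman_ge0 (cvx i) ((sm i).1 xstar).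
have per i : (\int[P]_x ((omega i)%:E * (S i x)%:E) <= (T i)%:E)%E.
  rewrite integralZl //.
  have [ompos|omneg] := leP 0 (omega i).
    apply: le_trans (lee_wpmul2l _ (step i).2) _; first by rewrite lee_fin.
    rewrite -EFinM lee_fin.
    have b0 : 0 < beta i := (andP (hb i)).1.
    have A0 := om_nonneg (e i) (HB i).
    have h1 : (1 - beta i) * (omega i * sqnorm (e i)) <= (1 - bm) * (omega i * sqnorm (e i)).
      by apply: (ler_wpM2r A0); rewrite lerD2l lerN2; exact: bigmin_le.
    have coc := cocoercive xk xstar (cvx i) (sm i).
    have h2 : omega i * beta i * sqnorm (e i + u i) <= omega i * beta i * (2 * L i * D i).
      by apply: (ler_wpM2l (mulr_ge0 ompos (ltW b0))); rewrite eu.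
    have h3 : beta i * omega i * L i * D i <= bw * D i.
      by apply: (ler_wpM2r (D0 i)); exact: le_bigmax (fun j => beta j * omega j * L j) i.
    have -> : omega i * ((1 - beta i) * sqnorm (e i) + beta i * sqnorm (e i + u i)) =
      (1 - beta i) * (omega i * sqnorm (e i)) + omega i * beta i * sqnorm (e i + u i) by ring.
    rewrite /T -[2 * bw * D i]mulrA.
    apply: aux3 h1 h2 _ h3; ring.
  have Z0 (v : 'rV[R]_d) : sqnorm v = 0.
    apply/eqP; rewrite eq_le sqnorm_ge0 andbT.
    by have := om_nonneg v (HB i); rewrite nmulr_rge0.
  have -> : (\int[P]_x (S i x)%:E = 0)%E.
    under eq_integral => x _ do rewrite /S Z0.
    exact: integral_cstP.
  rewrite mule0 lee_fin /T Z0 mulr0 mulr0 add0r.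
  by apply: mulr_ge0 (D0 i); apply: mulr_ge0 => //; exact: bigmax_ge0.
apply: (le_trans (y := ((n%:R^-1)%:E * (\sum_(i < n) (T i)%:E))%E)).
  apply: lee_wpmul2l; first by rewrite lee_fin invr_ge0 ler0n.
  by apply: lee_sum => i _; exact: per i.
rewrite sumEFin -EFinM lee_fin.
have G : dotv (grad f xstar) (xk - xstar) =
   n%:R^-1 * \sum_(i < n) dotv (grad (fs i) xstar) (xk - xstar).
  exact: (grad_avg (n%:R^-1) (xk - xstar) (fun i => (sm i).1 xstar)).
have BF : bregman f xk xstar = n%:R^-1 * \sum_(i < n) D i.
  have F1 : f xk = n%:R^-1 * \sum_(i < n) fs i xk by [].
  have F2 : f xstar = n%:R^-1 * \sum_(i < n) fs i xstar by [].
  rewrite /bregman F1 F2 G -!mulrBr -!sumrB.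
  by [].
rewrite BF /T big_split /= -!mulr_sumr /e.
rewrite le_eqVlt; apply/orP; left; apply/eqP; ring.
Qed.
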